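(* Let $k\ge1$, $d\ge1$ and $n_1,\dots,n_k\ge2$ be integers. For every $\Sigma\in\Sigma_k(n_1,\dots,n_k)$, the linear automorphism of $W_k(d;n_1,\dots,n_k)$ given by the action of $\Sigma$ changes the orientation according to $\mathrm{orient}(\Sigma)$, i.e. it preserves orientation if $\mathrm{orient}(\Sigma)=+1$ and reverses it if $\mathrm{orient}(\Sigma)=-1$. In particular $\mathrm{orient}:\Sigma_k(n_1,\dots,n_k)\to(\{-1,+1\},\cdot)$ is a group homomorphism.
   Context: $W_n=\{x\in\mathbb{R}^n:\sum x_i=0\}$ with $S_n$ acting by $\sigma\cdot(x_1,\dots,x_n)=(x_{\sigma^{-1}(1)},\dots,x_{\sigma^{-1}(n)})$. Wreath product action: if $G$ acts on $X$ and $S_n$ on $Y$, $G^{\times n}\rtimes S_n$ ($S_n$ permuting factors) acts on $X^{\times n}\times Y$ by $(g_1,\dots,g_n;\sigma)\cdot(x_1,\dots,x_n;y)=(g_1x_{\sigma^{-1}(1)},\dots,g_nx_{\sigma^{-1}(n)};\sigma y)$. $\Sigma_1(n_1)=S_{n_1}$, $\Sigma_k(n_1,\dots,n_k)=\Sigma_{k-1}(n_1,\dots,n_{k-1})^{\times n_k}\rtimes S_{n_k}$. $W_1(d;n_1)=W_{n_1}^{\oplus(d-1)}$ (as $\{(z_1,\dots,z_{n_1})\in(\mathbb{R}^{d-1})^{n_1}:\sum z_i=0\}$ with $S_{n_1}$ permuting the $z_i$), $W_k(d;n_1,\dots,n_k)=W_{k-1}(d;n_1,\dots,n_{k-1})^{\oplus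 n_k}\oplus W_{n_k}^{\oplus(d-1)}$ with the inductively defined wreath product action. The orientation function $\mathrm{orient}:\Sigma_k(n_1,\dots,n_k)\to\{-1,+1\}$ is defined by $\mathrm{orient}(\sigma)=(\mathrm{sgn}\,\sigma)^{d-1}$ for $k=1$, and for $k\ge2$ by $\mathrm{orient}(\Sigma_1,\dots,\Sigma_{n_k};\sigma)=(\mathrm{sgn}\,\sigma)^{(d-1)n_1\cdots n_{k-1}}\cdot\mathrm{orient}(\Sigma_1)\cdots\mathrm{orient}(\Sigma_{n_k})$. *)

(* Defs.v *)
From HB Require Import structures.
From mathcomp Require Import all_boot all_order all_algebra all_fingroup.
Set Implicit Arguments. Unset Strict Implicit. Unset Printing Implicit Defensive.
Import Order.TTheory GRing.Theory Num.Theory.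
Local Open Scope ring_scope.

(* Conventions: the parameters (n_1, ..., n_k) are given as n1 : nat and the
   list ns = [:: n_k; n_(k-1); ...; n_2] (outermost level first), so that
   k = (size ns).+1.  All objects below are defined by recursion on ns,
   following the inductive definitions Sigma_k = Sigma_(k-1)^(n_k) x| S_(n_k)
   and W_k = W_(k-1)^(n_k) (+) W_(n_k)^(d-1). *)

Fixpoint SigmaT (n1 : nat) (ns : seq nat) : Type :=
  match ns with
  | [::] => 'S_n1
  | nk :: rest => ({ffun 'I_nk -> SigmaT n1 rest} * 'S_nk)%type
  end.

(* group law of the wreath product:
   (g; s) (h; t) = (i |-> g_i h_(s^-1 i) ; s o t).
   mathcomp's product of permutations is left-to-right: (t * s) = s o t. *)
Fixpoint Smul (n1 : nat) (ns : seq nat) : SigmaT n1 ns -> SigmaT n1 ns -> SigmaT n1 ns :=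
  match ns return SigmaT n1 ns -> SigmaT n1 ns -> SigmaT n1 ns with
  | [::] => fun s t => (t * s)%g
  | nk :: rest => fun X Y =>
      ([ffun i => Smul (X.1 i) (Y.1 (X.2^-1 i)%g)], (Y.2 * X.2)%g)
  end.

Definition sgnp (n : nat) (s : 'S_n) : int := (-1) ^+ odd_perm s.

Fixpoint orient (d n1 : nat) (ns : seq nat) : SigmaT n1 ns -> int :=
  match ns return SigmaT n1 ns -> int with
  | [::] => fun s => sgnp s ^+ (d - 1)
  | nk :: rest => fun X =>
      sgnp X.2 ^+ ((d - 1) * (n1 * \prod_(n <- rest) n))
      * \prod_(i < nk) orient d (X.1 i)
  end.

(* Coordinates of the ambient space containing W_k:
   level 1: (R^(d-1))^(n1), coordinate (a, i) = a-th coordinate of z_i;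
   level k: (ambient_(k-1))^(n_k) (+) (R^(n_k))^(d-1),
   inl (i, p) = coordinate p of the i-th copy, inr (a, i) = i-th coordinate of
   the a-th copy of R^(n_k). *)
Fixpoint Idx (d n1 : nat) (ns : seq nat) : finType :=
  match ns with
  | [::] => ('I_(d - 1) * 'I_n1)%type
  | nk :: rest => (('I_nk * Idx d n1 rest) + ('I_(d - 1) * 'I_nk))%type
  end.

(* index set of the linear constraints cutting out W_k *)
Fixpoint Cdx (d n1 : nat) (ns : seq nat) : finType :=
  match ns with
  | [::] => 'I_(d - 1)
  | nk :: rest => (('I_nk * Cdx d n1 rest) + 'I_(d - 1))%type
  end.

Definition Vec (R : fieldType) (d n1 : nat) (ns : seq nat) := {ffun Idx d n1 ns -> R^o}.
Definition CVec (R : fieldType) (d n1 : nat) (ns : seq nat) := {ffun Cdx d n1 ns -> R^o}.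

(* the constraints: sums of the z_i vanish (level 1); at level k every
   block lies in W_(k-1) and each of the d-1 copies of R^(n_k) has sum 0 *)
Fixpoint constr (R : fieldType) (d n1 : nat) (ns : seq nat) :
    Vec R d n1 ns -> CVec R d n1 ns :=
  match ns return Vec R d n1 ns -> CVec R d n1 ns with
  | [::] => fun x => [ffun a => \sum_(i < n1) x (a, i)]
  | nk :: rest => fun x =>
      [ffun q => match q with
                 | inl (i, j) =>
                     constr (R := R) [ffun p => x (inl (i, p))] j
                 | inr a => \sum_(i < nk) x (inr (a, i))
                 end]
  end.

Definition Wk (R : fieldType) (d n1 : nat) (ns : seq nat) : {vspace Vec R d n1 ns} :=
  lker (linfun (@constr R d n1 ns)).

Fixpoint wr_act (R : fieldType) (d n1 : nat) (ns : seq nat) :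
    SigmaT n1 ns -> Vec R d n1 ns -> Vec R d n1 ns :=
  match ns return SigmaT n1 ns -> Vec R d n1 ns -> Vec R d n1 ns with
  | [::] => fun s x => [ffun p => x (p.1, (s^-1)%g p.2)]
  | nk :: rest => fun X x =>
      [ffun q => match q with
                 | inl (i, p) =>
                     wr_act (R := R) (d := d) (X.1 i)
                       [ffun p' => x (inl ((X.2^-1)%g i, p'))] p
                 | inr (a, i) => x (inr (a, (X.2^-1)%g i))
                 end]
  end.

(* matrix (row-vector convention) of the restriction of f to the subspace U,
   in the basis vbasis U; its determinant is the determinant of f|_U *)
Definition restr_mx (K : fieldType) (vT : vectType K) (U : {vspace vT})
    (f : vT -> vT) : 'M[K]_(\dim U) :=
  \matrix_(i, j) coord (vbasis U) j (f (tnth (vbasis U) i)).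

(* sign of the determinant of f|_U: +1 orientation preserving,
   -1 orientation reversing *)
Definition orient_change (K : realFieldType) (vT : vectType K) (U : {vspace vT})
    (f : vT -> vT) : K := Num.sg (\det (restr_mx U f)).

(* Main.v *)
Require Import Defs.
From HB Require Import structures.
From mathcomp Require Import all_boot all_order all_algebra all_fingroup.
Import Order.TTheory GRing.Theory Num.Theory.
Local Open Scope ring_scope.
Set Implicit Arguments. Unset Strict Implicit.

Section Liftp.
Local Open Scope group_scope.
Variables (A B : finType) (m : A -> B) (minj : injective m).

Definition liftf (p : {perm A}) (b : B) : B :=
  if [pick a | m a == b] is Some a then m (p a) else b.

Lemma liftf_m p a : liftf p (m a) = m (p a).
Proof.
rewrite /liftf; case: pickP => [a' /eqP/minj -> // | /(_ a)]; by rewrite eqxx.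
Qed.

Lemma liftf_out p b : (forall a, m a != b) -> liftf p b = b.
Proof.
move=> H; rewrite /liftf; case: pickP => // a /eqP ab.
by have := H a; rewrite ab eqxx.
Qed.

Lemma liftf_inj p : injective (liftf p).
Proof.
move=> b1 b2; rewrite /liftf.
case: pickP => [a1 /eqP <- | n1]; case: pickP => [a2 /eqP <- | n2] //.
- by move/minj/perm_inj ->.
- by move=> e; have := n2 (p a1); rewrite e eqxx.
- by move=> e; have := n1 (p a2); rewrite -e eqxx.
Qed.

Definition liftp p : {perm B} := perm (@liftf_inj p).

Lemma liftpE p a : liftp p (m a) = m (p a).
Proof. by rewrite permE liftf_m. Qed.

Lemma liftpE_out p b : (forall a, m a != b) -> liftp p b = b.
Proof. by move=> H; rewrite permE liftf_out. Qed.

Lemma liftp_case (P : B -> Prop) : (forall a, P (m a)) -> (forall b, (forall a, m a != b) -> P b) -> forall b, P b.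
Proof.
move=> H1 H2 b; case: (pickP (fun a => m a == b)) => [a /eqP <- // | n].
by apply: H2 => a; rewrite n.
Qed.

Lemma liftp1 : liftp 1 = 1.
Proof.
apply/permP; apply: liftp_case => [a|b H]; first by rewrite liftpE !perm1.
by rewrite liftpE_out // perm1.
Qed.

Lemma liftpM p q : liftp (p * q) = liftp p * liftp q.
Proof.
apply/permP; apply: liftp_case => [a|b H].
  by rewrite permM !liftpE permM.
by rewrite permM !liftpE_out.
Qed.

Lemma liftp_tperm x y : liftp (tperm x y) = tperm (m x) (m y).
Proof.
apply/permP; apply: liftp_case => [a|b H].
  rewrite liftpE.
  have [->|->|ax ay] := tpermP x y a.
  - by rewrite tpermL.
  - by rewrite tpermR.
  rewrite tpermD // (inj_eq minj) eq_sym; apply/eqP; congruence.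
by rewrite liftpE_out // tpermD // eq_sym.
Qed.

Lemma odd_liftp p : odd_perm (liftp p) = odd_perm p.
Proof.
case: (prod_tpermP p) => ts -> dts.
have -> : liftp (\prod_(t <- ts) tperm t.1 t.2) =
   \prod_(t <- map (fun t => (m t.1, m t.2)) ts) tperm t.1 t.2.
  elim: ts {dts} => [|t ts IH]; first by rewrite !big_nil liftp1.
  by rewrite /= !big_cons liftpM IH liftp_tperm.
rewrite !odd_perm_prod ?size_map //.
by rewrite all_map; apply: sub_all dts => t /=; rewrite (inj_eq minj).
Qed.

End Liftp.

Section Blocks.
Local Open Scope group_scope.
Variables (I J : finType).

Definition rowf (h : I -> {perm J}) (x : I * J) : I * J := (x.1, h x.1 x.2).
Lemma rowf_inj h : injective (rowf h).
Proof. by move=> [i j] [i' j'] [<-] /perm_inj ->. Qed.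
Definition rowp h : {perm I * J} := perm (@rowf_inj h).
Lemma rowpE h i j : rowp h (i, j) = (i, h i j).
Proof. by rewrite permE. Qed.

Definition colf (s : {perm I}) (x : I * J) : I * J := (s x.1, x.2).
Lemma colf_inj s : injective (colf s).
Proof. by move=> [i j] [i' j'] [/perm_inj <- <-]. Qed.
Definition colp s : {perm I * J} := perm (@colf_inj s).
Lemma colpE s i j : colp s (i, j) = (s i, j).
Proof. by rewrite permE. Qed.

Lemma odd_rowp_seq (s : seq I) (h : I -> {perm J}) : uniq s ->
  (forall i, i \notin s -> h i = 1) ->
  odd_perm (rowp h) = odd (\sum_(i <- s) odd_perm (h i)).
Proof.
elim: s h => [|i0 s IH] h /=.
  move=> _ H; rewrite big_nil.
  have -> : rowp h = 1 by apply/permP => [[i j]]; rewrite rowpE H // !perm1.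
  by rewrite odd_perm1.
case/andP => ni0 us H.
pose h' i := if i == i0 then 1 else h i.
have inj0 : injective (fun j : J => (i0, j)) by move=> j j' [].
have -> : rowp h = rowp h' * liftp inj0 (h i0).
  apply/permP => [[i j]]; rewrite permM !rowpE /h'.
  have [-> | ne] := eqVneq i i0.
    by rewrite perm1 (liftpE inj0 _ j).
  rewrite (liftpE_out inj0) //.
  by move=> a; apply/eqP => [[]] /esym/eqP; rewrite (negbTE ne).
rewrite odd_permM (odd_liftp inj0) big_cons oddD addbC.
rewrite (IH h') //; last first.
  move=> i ni; rewrite /h'; case: eqVneq => // ne; apply: H.
  by rewrite inE negb_or ni ne.
rewrite oddb; congr (_ (+) odd _).
rewrite big_seq_cond [RHS]big_seq_cond; apply: eq_bigr => i /andP[iin _].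
by rewrite /h'; case: eqVneq => // e; rewrite -e iin in ni0.
Qed.

Lemma odd_rowp (h : I -> {perm J}) :
  odd_perm (rowp h) = odd (\sum_(i : I) odd_perm (h i)).
Proof.
by rewrite (@odd_rowp_seq (enum I)) ?enum_uniq ?big_enum // => i; rewrite mem_enum.
Qed.

End Blocks.

Section Colp.
Local Open Scope group_scope.
Lemma odd_colp (I J : finType) (s : {perm I}) :
  odd_perm (colp J s) = odd (#|J| * odd_perm s).
Proof.
have swinj : injective (fun x : J * I => (x.2, x.1)) by move=> [a b] [c e] [-> ->].
have -> : colp J s = liftp swinj (rowp (fun _ : J => s)).
  apply/permP => [[i j]].
  by rewrite colpE (liftpE swinj _ (j, i)) rowpE.
by rewrite odd_liftp odd_rowp sum_nat_const.
Qed.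
End Colp.


Section Sum.
Local Open Scope group_scope.
Variables (A B : finType).
Definition sumf (p : {perm A}) (q : {perm B}) (x : A + B) : A + B :=
  match x with inl a => inl (p a) | inr b => inr (q b) end.
Lemma sumf_inj p q : injective (sumf p q).
Proof. by move=> [a|b] [a'|b'] //= [] /perm_inj ->. Qed.
Definition sump p q : {perm A + B} := perm (@sumf_inj p q).
Lemma sumpl p q a : sump p q (inl a) = inl (p a). Proof. by rewrite permE. Qed.
Lemma sumpr p q b : sump p q (inr b) = inr (q b). Proof. by rewrite permE. Qed.

Lemma odd_sump p q : odd_perm (sump p q) = odd_perm p (+) odd_perm q.
Proof.
have il : injective (@inl A B) by move=> ? ? [].
have ir : injective (@inr A B) by move=> ? ? [].
have -> : sump p q = liftp il p * liftp ir q.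
  apply/permP => [[a|b]]; rewrite permM ?sumpl ?sumpr.
    by rewrite (liftpE il) (liftpE_out ir).
  by rewrite (liftpE_out il) ?(liftpE ir).
by rewrite odd_permM !odd_liftp.
Qed.
End Sum.

Section MxB.
Variables (K : fieldType) (vT : vectType K).

Definition mxB n (X : n.-tuple vT) (f : vT -> vT) : 'M[K]_n :=
  \matrix_(i, j) coord X j (f X`_i).

Lemma restr_mxE (U : {vspace vT}) f : restr_mx U f = mxB (vbasis U) f.
Proof. by apply/matrixP => i j; rewrite !mxE (tnth_nth 0). Qed.

Lemma restr_mx_ext (U : {vspace vT}) f g : f =1 g -> restr_mx U f = restr_mx U g.
Proof. by move=> fg; apply/matrixP => i j; rewrite !mxE fg. Qed.

Lemma coordS n (X : n.-tuple vT) l m (a : 'I_m -> K) (v : 'I_m -> vT) :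
  coord X l (\sum_(j < m) a j *: v j) = \sum_(j < m) a j * coord X l (v j).
Proof.
rewrite linear_sum [LHS](eq_bigr (fun j => a j * coord X l (v j))) //.
by move=> j _; rewrite linearZ.
Qed.

Lemma linS (f : {linear vT -> vT}) m (a : 'I_m -> K) (v : 'I_m -> vT) :
  f (\sum_(j < m) a j *: v j) = \sum_(j < m) a j *: f (v j).
Proof. by rewrite linear_sum; apply: eq_bigr => j _; rewrite linearZ. Qed.

Lemma mxB_change (U : {vspace vT}) n (X Y : n.-tuple vT) (f : {linear vT -> vT}) :
  basis_of U X -> basis_of U Y -> (forall u, u \in U -> f u \in U) ->
  \det (mxB X f) = \det (mxB Y f).
Proof.
move=> bX bY fU.
have XU (i : 'I_n) : X`_i \in U by apply: (basis_mem bX); rewrite mem_nth ?size_tuple.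
have YU (i : 'I_n) : Y`_i \in U by apply: (basis_mem bY); rewrite mem_nth ?size_tuple.
pose T := \matrix_(i < n, j < n) coord Y j X`_i.
pose T' := \matrix_(i < n, j < n) coord X j Y`_i.
have TT' : T *m T' = 1%:M.
  apply/matrixP => i l; rewrite !mxE.
  rewrite -(coord_free i l (basis_free bX)) [in RHS](coord_basis bY (XU i)).
  rewrite coordS; apply: eq_bigr => j _.
  by rewrite /T /T' !mxE.
have eqM : mxB X f = T *m (mxB Y f *m T').
  apply/matrixP => i l; rewrite !mxE.
  rewrite (coord_basis bY (XU i)) linS coordS.
  apply: eq_bigr => j _; rewrite !mxE.
  rewrite (coord_basis bY (fU _ (YU j))) coordS; congr (_ * _).
  by apply: eq_bigr => k _; rewrite /T' !mxE.
rewrite eqM !det_mulmx mulrCA -det_mulmx TT' det1 mulr1.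
by [].
Qed.
End MxB.

Lemma mxB_change_gen (K : fieldType) (vT : vectType K) (U : {vspace vT}) n m
  (X : n.-tuple vT) (Y : m.-tuple vT) (f : {linear vT -> vT}) :
  basis_of U X -> basis_of U Y -> (forall u, u \in U -> f u \in U) ->
  \det (mxB X f) = \det (mxB Y f).
Proof.
move=> bX bY fU; have e : n = m by rewrite -(size_basis bX) (size_basis bY).
by subst m; exact: mxB_change bX bY fU.
Qed.

Lemma linS2 (K : pzRingType) (U V : lmodType K) (f : {linear U -> V}) m
  (a : 'I_m -> K) (v : 'I_m -> U) :
  f (\sum_(j < m) a j *: v j) = \sum_(j < m) a j *: f (v j).
Proof. by rewrite linear_sum; apply: eq_bigr => j _; rewrite linearZ. Qed.

Section Conj.
Local Open Scope group_scope.
Variable T : finType.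
Definition conjf (p : {perm T}) (k : 'I_#|T|) : 'I_#|T| := enum_rank (p (enum_val k)).
Lemma conjf_inj p : injective (conjf p).
Proof. by move=> k l /(congr1 enum_val); rewrite /conjf !enum_rankK => /perm_inj /enum_val_inj. Qed.
Definition conjp p : 'S_#|T| := perm (@conjf_inj p).
Lemma conjpE p k : enum_val (conjp p k) = p (enum_val k).
Proof. by rewrite permE /conjf enum_rankK. Qed.
Lemma odd_conjp p : odd_perm (conjp p) = odd_perm p.
Proof.
have einj : injective (@enum_val T T) by exact: enum_val_inj.
rewrite -(odd_liftp einj); congr odd_perm; apply/permP => t.
by rewrite -(enum_rankK t) (liftpE einj) conjpE.
Qed.
End Conj.

Section Q.
Variable R : fieldType.

Definition delta (T : finType) (t : T) : {ffun T -> R^o} := [ffun t' => (t' == t)%:R].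
Definition Pmap (T : finType) (p : {perm T}) (x : {ffun T -> R^o}) : {ffun T -> R^o} :=
  [ffun i => x (p i)].

Lemma Pmap_lin T p : linear (@Pmap T p).
Proof. by move=> a x y; apply/ffunP => i; rewrite !ffunE. Qed.
HB.instance Definition _ T p := GRing.isLinear.Build R _ _ _ (@Pmap T p) (@Pmap_lin T p).

Lemma sum_delta_at (T : finType) (a : 'I_#|T| -> R) k0 :
  (\sum_(k < #|T|) a k *: delta (enum_val k)) (enum_val k0) = a k0.
Proof.
rewrite sum_ffunE (bigD1 k0) //= big1 => [|k nk]; rewrite !ffunE.
  by rewrite eqxx addr0; apply: mulr1.
by rewrite (inj_eq enum_val_inj) eq_sym (negbTE nk) scaler0.
Qed.

Lemma ffun_expand (T : finType) (x : {ffun T -> R^o}) :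
  x = \sum_(k < #|T|) x (enum_val k) *: delta (enum_val k).
Proof.
apply/ffunP => t; rewrite -(enum_rankK t) sum_delta_at.
by [].
Qed.

Lemma Pmap_delta (T : finType) (p : {perm T}) t : Pmap p (delta t) = delta ((p^-1)%g t).
Proof.
apply/ffunP => i; rewrite !ffunE.
by rewrite -[in LHS](permKV p t) (inj_eq perm_inj).
Qed.

Definition stdE (T : finType) : #|T|.-tuple {ffun T -> R^o} :=
  [tuple delta (enum_val k) | k < #|T|].

Lemma stdE_nth (T : finType) (k : 'I_#|T|) : (stdE T)`_k = delta (enum_val k).
Proof. by rewrite nth_mktuple. Qed.

Lemma stdE_basis (T : finType) : basis_of fullv (stdE T).
Proof.
rewrite /basis_of; apply/andP; split.
  rewrite eqEsubv subvf /=; apply/subvP => x _.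
  rewrite (ffun_expand x); apply: memv_suml => k _; apply: memvZ.
  by rewrite -stdE_nth; apply: memv_span; rewrite mem_nth ?size_tuple.
apply/freeP => a Ha k.
have := congr1 (fun x : {ffun T -> R^o} => x (enum_val k)) Ha; rewrite /= ffunE.
rewrite (eq_bigr (fun k => a k *: delta (enum_val k))) => [|j _]; last by rewrite stdE_nth.
by rewrite sum_delta_at.
Qed.

Lemma det_stdE (T : finType) (p : {perm T}) :
  \det (mxB (stdE T) (Pmap p)) = (-1) ^+ odd_perm p.
Proof.
have -> : mxB (stdE T) (Pmap p) = perm_mx (conjp (p^-1)%g).
  apply/matrixP => k l; rewrite !mxE stdE_nth Pmap_delta.
  rewrite -conjpE -stdE_nth coord_free ?(basis_free (stdE_basis T)) //.
by rewrite det_perm odd_conjp odd_permV.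
Qed.


Lemma detQ (I J : finType) (c : {linear {ffun I -> R^o} -> {ffun J -> R^o}})
  (p : {perm I}) (q : {perm J})
  (hc : forall x, c (Pmap p x) = Pmap q (c x))
  (surj : forall j, exists y, c y = delta j) :
  (forall x, x \in lker (linfun c) -> Pmap p x \in lker (linfun c)) /\
  \det (restr_mx (lker (linfun c)) (Pmap p)) = (-1) ^+ (odd_perm p (+) odd_perm q).
Proof.
set W := lker (linfun c).
have memW x : (x \in W) = (c x == 0) by rewrite memv_ker lfunE.
have PW x : x \in W -> Pmap p x \in W.
  by rewrite !memW hc => /eqP ->; rewrite linear0.
split => //.
have [pre preE] := fin_all_exists surj.
pose X := vbasis W.
pose Y := [tuple pre (enum_val k) | k < #|J|].
pose Z := cat_tuple X Y.
have ZX (i : 'I_(\dim W)) : Z`_(lshift #|J| i) = X`_i.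
  by rewrite /= nth_cat size_tuple /= ltn_ord.
have ZY (k : 'I_#|J|) : Z`_(rshift (\dim W) k) = Y`_k.
  by rewrite /= nth_cat size_tuple /= ltnNge leq_addr /= addKn.
have XW (i : 'I_(\dim W)) : X`_i \in W.
  by apply: (basis_mem (vbasisP W)); rewrite mem_nth ?size_tuple.
have Yk (k : 'I_#|J|) : Y`_k = pre (enum_val k) by rewrite nth_mktuple.
have cY (a : 'I_#|J| -> R) : c (\sum_(k < #|J|) a k *: Y`_k) = \sum_(k < #|J|) a k *: delta (enum_val k).
  by rewrite linS2; apply: eq_bigr => k _; rewrite Yk preE.
have freeX : free X := basis_free (vbasisP W).
have freeZ : free Z.
  apply/freeP => a Ha.
  rewrite big_split_ord /= in Ha.
  have hb k : a (rshift (\dim W) k) = 0.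
    have := congr1 c Ha; rewrite linear0 linearD /=.
    rewrite (eq_bigr (fun k => a (rshift (\dim W) k) *: Y`_k)) => [|j _]; last by rewrite ZY.
    rewrite cY linear_sum big1 => [|i _]; last first.
      by rewrite ZX linearZ /= (eqP (etrans (esym (memW _)) (XW i))) scaler0.
    rewrite add0r => /(congr1 (fun x : {ffun J -> R^o} => x (enum_val k))).
    by rewrite sum_delta_at ffunE.
  have ha i : a (lshift #|J| i) = 0.
    move: Ha; rewrite [X in _ + X = _]big1 => [|k _]; last by rewrite hb scale0r.
    rewrite addr0 (eq_bigr (fun i => a (lshift #|J| i) *: X`_i)) => [|j _]; last by rewrite ZX.
    by move/freeP: freeX => H /H ->.
  move=> t; case: (fintype.splitP t) => [i ei | k ek].
    by rewrite (_ : t = lshift #|J| i) ?ha //; apply: val_inj.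
  by rewrite (_ : t = rshift (\dim W) k) ?hb //; apply: val_inj.
have bZ : basis_of fullv Z.
  rewrite /basis_of freeZ andbT eqEsubv subvf /=; apply/subvP => v _.
  rewrite span_cat.
  rewrite -[v](subrK (\sum_(k < #|J|) c v (enum_val k) *: Y`_k)).
  apply: memv_add.
    rewrite (span_basis (vbasisP W)) memW linearB /= cY -ffun_expand subrr.
    by [].
  by apply: memv_suml => k _; apply: memvZ; apply: memv_span; rewrite mem_nth ?size_tuple.
have cZX v (vW : v \in W) :
  (forall j, coord Z (lshift #|J| j) v = coord X j v) /\
  (forall k, coord Z (rshift (\dim W) k) v = 0).
  have ev := coord_basis (vbasisP W) vW.
  split => [j|k]; rewrite {1}ev coordS.
    rewrite (eq_bigr (fun i => coord X i v * (lshift #|J| i == lshift #|J| j)%:R)) => [|i _]; last first.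
      by rewrite -ZX coord_free.
    rewrite (bigD1 j) //= eqxx mulr1 big1 ?addr0 // => i nij.
    by rewrite (inj_eq (@lshift_inj _ _)) (negbTE nij) mulr0.
  rewrite big1 // => i _; rewrite -ZX coord_free //.
  have -> : (lshift #|J| i == rshift (\dim W) k) = false.
    apply/negbTE; rewrite -val_eqE /= ltn_eqF //.
    exact: leq_trans (ltn_ord i) (leq_addr _ _).
  by rewrite mulr0.
have cZY (k : 'I_#|J|) t : coord Z t (Y`_k) = (rshift (\dim W) k == t)%:R by rewrite -ZY coord_free.
pose s := conjp (q^-1)%g.
have PYk (k : 'I_#|J|) : Pmap p Y`_k - Y`_(s k) \in W.
  rewrite memW linearB /= hc !Yk !preE Pmap_delta conjpE subrr.
  by [].
pose M := mxB Z (Pmap p).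
have ur0 : ursubmx M = 0.
  apply/matrixP => i k; rewrite !mxE ZX.
  by case: (cZX _ (PW _ (XW i))) => _ ->.
have ul : ulsubmx M = restr_mx W (Pmap p).
  apply/matrixP => i j; rewrite restr_mxE !mxE ZX.
  by case: (cZX _ (PW _ (XW i))) => -> _.
have dr : drsubmx M = perm_mx s.
  apply/matrixP => k l; rewrite !mxE ZY.
  rewrite -[Pmap p Y`_k](subrK Y`_(s k)) linearD /=.
  case: (cZX _ (PYk k)) => _ ->; rewrite add0r cZY.
  by rewrite (inj_eq (@rshift_inj _ _)).
have detM : \det M = \det (restr_mx W (Pmap p)) * (-1) ^+ odd_perm q.
  by rewrite -(submxK M) ur0 det_lblock ul dr det_perm odd_conjp odd_permV.
have detM2 : \det M = (-1) ^+ odd_perm p.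
  rewrite -(det_stdE p); apply: mxB_change_gen bZ (stdE_basis I) _ => u _.
  exact: memvf.
by rewrite signr_addb -detM2 detM -mulrA -expr2 sqrr_sign mulr1.
Qed.

End Q.

Fixpoint permI (d n1 : nat) (ns : seq nat) : SigmaT n1 ns -> {perm Idx d n1 ns} :=
  match ns return SigmaT n1 ns -> {perm Idx d n1 ns} with
  | [::] => fun s => rowp (fun _ : 'I_(d - 1) => (s^-1)%g)
  | nk :: rest => fun X =>
      sump (rowp (fun i => permI d (X.1 i)) * colp _ (X.2^-1))%g
           (rowp (fun _ : 'I_(d - 1) => (X.2^-1)%g))
  end.

Fixpoint permC (d n1 : nat) (ns : seq nat) : SigmaT n1 ns -> {perm Cdx d n1 ns} :=
  match ns return SigmaT n1 ns -> {perm Cdx d n1 ns} with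
  | [::] => fun s => 1%g
  | nk :: rest => fun X =>
      sump (rowp (fun i => permC d (X.1 i)) * colp _ (X.2^-1))%g 1%g
  end.

Section Struct.
Variable R : fieldType.

Lemma wr_act_inl d n1 nk rest (X : SigmaT n1 (nk :: rest)) (x : Vec R d n1 (nk :: rest)) i p :
  wr_act X x (inl (i, p)) = wr_act (X.1 i) [ffun p' => x (inl ((X.2^-1)%g i, p'))] p.
Proof. by rewrite ffunE. Qed.

Lemma wr_act_inr d n1 nk rest (X : SigmaT n1 (nk :: rest)) (x : Vec R d n1 (nk :: rest)) a i :
  wr_act X x (inr (a, i)) = x (inr (a, (X.2^-1)%g i)).
Proof. by rewrite ffunE. Qed.

Lemma constr_inl d n1 nk rest (x : Vec R d n1 (nk :: rest)) i j :
  constr x (inl (i, j)) = constr [ffun p => x (inl (i, p))] j.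
Proof. by rewrite ffunE. Qed.

Lemma constr_inr d n1 nk rest (x : Vec R d n1 (nk :: rest)) a :
  constr x (inr a) = \sum_(i < nk) x (inr (a, i)).
Proof. by rewrite ffunE. Qed.

Lemma constr_nil d n1 (x : Vec R d n1 [::]) a :
  constr x a = \sum_(i < n1) x (a, i).
Proof. by rewrite ffunE. Qed.

Lemma wr_act_nil d n1 (s : SigmaT n1 [::]) (x : Vec R d n1 [::]) a i :
  wr_act s x (a, i) = x (a, (s^-1)%g i).
Proof. by rewrite ffunE. Qed.

Lemma wr_actE d n1 ns (S : SigmaT n1 ns) (x : Vec R d n1 ns) :
  wr_act (d := d) S x = Pmap (permI d S) x.
Proof.
elim: ns S x => [|nk rest IH] S x.
  by apply/ffunP => -[a i]; rewrite wr_act_nil ffunE rowpE.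
apply/ffunP => -[[i p]|[a i]].
  by rewrite wr_act_inl IH !ffunE sumpl permM rowpE colpE.
by rewrite wr_act_inr ffunE sumpr rowpE.
Qed.


Lemma ffunDZ (T : finType) (a : R) (f g : {ffun T -> R^o}) q :
  (a *: f + g) q = a *: f q + g q.
Proof. by rewrite !ffunE. Qed.

Lemma constr_lin d n1 ns : linear (@constr R d n1 ns).
Proof.
elim: ns => [|nk rest IH] a x y; apply/ffunP.
  move=> b; rewrite !ffunE scaler_sumr -big_split; apply: eq_bigr => i _.
  by rewrite !ffunE.
move=> [[i j]|b]; rewrite ffunDZ.
  rewrite !constr_inl.
  have -> : [ffun p => (a *: x + y) (inl (i, p))] =
            a *: [ffun p => x (inl (i, p))] + [ffun p => y (inl (i, p))].
    by apply/ffunP => p; rewrite !ffunE.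
  by rewrite IH ffunDZ.
rewrite !constr_inr scaler_sumr -big_split; apply: eq_bigr => i _.
by rewrite !ffunE.
Qed.

End Struct.

HB.instance Definition _ (R : fieldType) d n1 ns :=
  GRing.isLinear.Build R (Vec R d n1 ns) (CVec R d n1 ns) _ (@constr R d n1 ns) (@constr_lin R d n1 ns).

Section Struct2.
Variable R : fieldType.

Lemma constr_wr d n1 ns (S : SigmaT n1 ns) (x : Vec R d n1 ns) :
  constr (wr_act (d := d) S x) = Pmap (permC d S) (constr x).
Proof.
elim: ns S x => [|nk rest IH] S x.
  apply/ffunP => a; rewrite [RHS]ffunE perm1 !constr_nil.
  rewrite [RHS](reindex_inj (@perm_inj _ (S^-1)%g)).
  by apply: eq_bigr => i _; rewrite wr_act_nil.
apply/ffunP => -[[i j]|a]; rewrite [RHS]ffunE.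
  rewrite sumpl permM rowpE colpE !constr_inl.
  have -> : [ffun p => wr_act S x (inl (i, p))] =
            wr_act (S.1 i) [ffun p' => x (inl ((S.2^-1)%g i, p'))].
    by apply/ffunP => p; rewrite ffunE wr_act_inl.
  by rewrite IH ffunE.
rewrite sumpr perm1 !constr_inr.
rewrite [RHS](reindex_inj (@perm_inj _ (S.2^-1)%g)).
by apply: eq_bigr => i _; rewrite wr_act_inr.
Qed.

Lemma inl_eqE (A B : eqType) (a b : A) : (inl a == inl b :> A + B) = (a == b).
Proof. by []. Qed.
Lemma inr_eqE (A B : eqType) (a b : B) : (inr a == inr b :> A + B) = (a == b).
Proof. by []. Qed.

Lemma constr_surj d n1 ns : (0 < n1)%N -> all (fun n => 0 < n)%N ns ->
  forall j, exists y : {ffun Idx d n1 ns -> R^o}, constr y = delta R j.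
Proof.
move=> n1p; elim: ns => [|nk rest IH] /=.
  move=> _ a; exists [ffun p => ((p.1 == a) && (val p.2 == 0%N))%:R].
  apply/ffunP => b; rewrite constr_nil [RHS]ffunE.
  rewrite (bigD1 (Ordinal n1p)) //= big1 => [|i ni]; rewrite ffunE /=.
    by rewrite eqxx andbT addr0.
  have -> : (val i == 0%N) = false.
    by apply/negbTE; apply: contra ni => /eqP e; apply/eqP/val_inj.
  by rewrite andbF.
case/andP => nkp /IH {}IH -[[i j]|a].
  have [y0 Hy0] := IH j.
  pose Y : {ffun Idx d n1 (nk :: rest) -> R^o} :=
    [ffun q => match q with inl (i', p) => if i' == i then y0 p else 0 | inr _ => 0 end].
  have EY i' : [ffun p : Idx d n1 rest => Y (inl (i', p))] = if i' == i then y0 else 0.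
    by case: eqVneq => [->|ne]; apply/ffunP => p; rewrite !ffunE ?eqxx // (negbTE ne).
  exists Y; apply/ffunP => -[[i' j']|b]; rewrite [RHS]ffunE.
    rewrite constr_inl EY.
    rewrite inl_eqE xpair_eqE.
    have [_ | ne] := eqVneq i' i; first by rewrite /= Hy0 ffunE.
    by rewrite linear0 ffunE.
  rewrite constr_inr big1 => [|k _]; last by rewrite ffunE.
  by [].
pose Y : {ffun Idx d n1 (nk :: rest) -> R^o} :=
  [ffun q => match q with inl _ => 0 | inr (a', k) => ((a' == a) && (val k == 0%N))%:R end].
have EY i' : [ffun p : Idx d n1 rest => Y (inl (i', p))] = 0.
  by apply/ffunP => p; rewrite !ffunE.
exists Y; apply/ffunP => -[[i' j']|b]; rewrite [RHS]ffunE.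
  by rewrite constr_inl EY linear0 ffunE.
rewrite constr_inr (bigD1 (Ordinal nkp)) //= big1 => [|k nk0]; rewrite ffunE /=.
  by rewrite andbT addr0.
have -> : (val k == 0%N) = false.
  by apply/negbTE; apply: contra nk0 => /eqP e; apply/eqP/val_inj.
by rewrite andbF.
Qed.

End Struct2.

Lemma cardIC d n1 ns :
  odd (#|Idx d n1 ns| + #|Cdx d n1 ns| + (d - 1)) = odd ((d - 1) * (n1 * \prod_(n <- ns) n)).
Proof.
elim: ns => [|nk rest IH] /=.
  rewrite big_nil muln1 card_prod !card_ord -addnA addnn oddD odd_double addbF.
  by rewrite mulnC.
rewrite !card_sum !card_prod !card_ord big_cons.
rewrite !oddD !oddM in IH *.
move: IH; case: (odd nk); case: (odd (d - 1)); case: (odd n1);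
  case: (odd (\prod_(n <- rest) n)); case: (odd #|Idx d n1 rest|);
  by case: (odd #|Cdx d n1 rest|).
Qed.

Lemma odd_sum_addb (I : finType) (a b : I -> bool) :
  odd (\sum_(i : I) (a i (+) b i)) = odd (\sum_(i : I) a i) (+) odd (\sum_(i : I) b i).
Proof.
elim/big_rec3: _ => //= i x y z _ H.
rewrite !oddD H !oddb.
by case: (a i); case: (b i); case: (odd y); case: (odd x).
Qed.

Lemma orientE d n1 ns (S : SigmaT n1 ns) :
  orient d S = (-1) ^+ (odd_perm (permI d S) (+) odd_perm (permC d S)).
Proof.
elim: ns S => [|nk rest IH] S /=.
  rewrite odd_rowp odd_perm1 addbF sum_nat_const card_ord odd_permV /sgnp.
  by rewrite -exprM signr_odd mulnC.
rewrite (eq_bigr (fun i => (-1) ^+ (odd_perm (permI d (S.1 i)) (+) odd_perm (permC d (S.1 i))))); last by move=> i _; rewrite IH.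
rewrite prodrXr /sgnp -exprM -exprD -[LHS]signr_odd; congr (_ ^+ (nat_of_bool _)).
rewrite !odd_sump !odd_permM !odd_rowp !odd_colp odd_perm1 !odd_permV.
rewrite sum_nat_const card_ord.
rewrite oddD [odd (_ * ((d - 1) * _))]oddM -cardIC odd_sum_addb !oddM !oddD.
case: (odd_perm S.2); rewrite ?andbT ?andbF ?addbF //=.
  by case: (odd (\sum_i _)); case: (odd (\sum_i (odd_perm (permC d (S.1 i)))));
     case: (odd #|Idx d n1 rest|); case: (odd #|Cdx d n1 rest|); case: (odd (d - 1)).
Qed.

Lemma orientM d n1 ns (S T : SigmaT n1 ns) :
  orient d (Smul S T) = orient d S * orient d T.
Proof.
elim: ns S T => [|nk rest IH] S T /=.
  by rewrite /sgnp odd_permM signr_addb exprMn mulrC.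
rewrite /sgnp odd_permM signr_addb exprMn.
rewrite (eq_bigr (fun i => orient d (S.1 i) * orient d (T.1 ((S.2^-1)%g i)))); last first.
  by move=> i _; rewrite ffunE IH.
rewrite big_split /= [X in _ * (_ * X)](reindex_inj (@perm_inj _ (S.2^-1)%g)) /=.
by rewrite [X in X * (_ * _) = _]mulrC mulrACA.
Qed.

Unset Implicit Arguments. Set Strict Implicit.

Theorem lemma3p6 (R : realFieldType) (d n1 : nat) (ns : seq nat) :
  (1 <= d)%N -> (2 <= n1)%N -> all (fun n => 2 <= n)%N ns ->
  (forall S : SigmaT n1 ns,
     (forall x, x \in Wk R d n1 ns -> wr_act (d := d) S x \in Wk R d n1 ns) /\
     orient_change (Wk R d n1 ns) (wr_act (d := d) S) = (orient d S)%:~R) /\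
  (forall S T : SigmaT n1 ns, orient d (Smul S T) = orient d S * orient d T).
Proof.
move=> _ n1p nsp; split; last exact: orientM.
move=> S.
have n1p' : (0 < n1)%N by apply: leq_trans n1p.
have nsp' : all (fun n => 0 < n)%N ns.
  by apply: sub_all nsp => n /= /(leq_trans _); apply.
have hc (x : {ffun Idx d n1 ns -> R^o}) : constr (Pmap (permI d S) x) = Pmap (permC d S) (constr x).
  by rewrite -wr_actE constr_wr.
have [PW detE] := detQ hc (@constr_surj R d n1 ns n1p' nsp').
split.
  by move=> x xW; rewrite wr_actE; apply: PW.
rewrite /orient_change (restr_mx_ext _ (wr_actE (R := R) (d := d) S)) detE.
rewrite orientE intr_sign.
by case: (_ (+) _); rewrite ?expr0 ?expr1 ?sgr1 ?sgrN1.
Qed.
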